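(* The map $\tau_{co}:\widetilde{\mathbb{K}}_{co}\to\widetilde{\mathbb{K}}$, $[(r_\varepsilon)_\varepsilon]\mapsto[(r_\varepsilon)_\varepsilon]$, is not surjective; i.e., there exists an element of $\widetilde{\mathbb{K}}$ having no representative $(r_\varepsilon)_\varepsilon$ with $\varepsilon\mapsto r_\varepsilon$ continuous on $I$.
   Context: Let $I=(0,1]$ and $\mathbb{K}\in\{\mathbb{R},\mathbb{C}\}$. Let $\mathcal{E}_M=\{(r_\varepsilon)_\varepsilon\in\mathbb{K}^I:\exists N\in\mathbb{N}: |r_\varepsilon|=O(\varepsilon^{-N})\text{ as }\varepsilon\to0\}$ and $\mathcal{N}=\{(r_\varepsilon)_\varepsilon\in\mathbb{K}^I:\forall m\in\mathbb{N}: |r_\varepsilon|=O(\varepsilon^{m})\}$, and $\widetilde{\mathbb{K}}=\mathcal{E}_M/\mathcal{N}$. Let $\mathcal{E}_{M,co}$, $\mathcal{N}_{co}$ be the subsets of $\mathcal{E}_M$, $\mathcal{N}$ consisting of nets with $\varepsilon\mapsto r_\varepsilon$ continuous on $I$, and $\widetilde{\mathbb{K}}_{co}=\mathcal{E}_{M,co}/\mathcal{N}_{co}$. The map $\tau_{co}$ is a well-defined injective unital ring homomorphism. *)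

(* Defs.v *)
From Stdlib Require Import Reals.
From Coquelicot Require Import Coquelicot.
Open Scope R_scope.

(* A net (r_eps)_{eps in I}, I = (0,1], is represented by a function R -> K;
   only its values on I are ever used.  [nrm] is the absolute value / modulus
   on K and [sub] the subtraction on K. *)

Definition moderate {K : Type} (nrm : K -> R) (r : R -> K) : Prop :=
  exists N : nat, exists c eta : R, 0 < c /\ 0 < eta /\
    forall e : R, 0 < e -> e <= 1 -> e < eta -> nrm (r e) <= c * / (e ^ N).

Definition negligible {K : Type} (nrm : K -> R) (r : R -> K) : Prop :=
  forall m : nat, exists c eta : R, 0 < c /\ 0 < eta /\
    forall e : R, 0 < e -> e <= 1 -> e < eta -> nrm (r e) <= c * (e ^ m).

Definition continuous_on_I {K : Type} (nrm : K -> R) (sub : K -> K -> K)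
    (r : R -> K) : Prop :=
  forall x : R, 0 < x -> x <= 1 ->
  forall d : R, 0 < d -> exists del : R, 0 < del /\
    forall y : R, 0 < y -> y <= 1 -> Rabs (y - x) < del ->
      nrm (sub (r y) (r x)) < d.

(* tau_co : K~_co -> K~ is not surjective: some class [r] in K~ (r moderate)
   has no preimage, i.e. no moderate continuous s with r - s negligible. *)
Definition tau_co_not_surjective {K : Type} (nrm : K -> R) (sub : K -> K -> K)
  : Prop :=
  exists r : R -> K, moderate nrm r /\
    forall s : R -> K, moderate nrm s -> continuous_on_I nrm sub s ->
      ~ negligible nrm (fun e => sub (r e) (s e)).

(* Main.v *)
Require Import Defs.
From Stdlib Require Import Reals Lra.
From Coquelicot Require Import Coquelicot.
Open Scope R_scope.

Definition rr (e : R) : R := IZR (up (/ e)).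

Lemma rr_mod : moderate Rabs rr.
Proof.
  exists 1%nat, 2, 2; split; [lra|split;[lra|]].
  intros e H1 H2 _. unfold rr. destruct (archimed (/ e)) as [A B].
  assert (0 < / e) by (apply Rinv_0_lt_compat; lra).
  assert (1 <= / e) by (rewrite <- Rinv_1; apply Rinv_le_contravar; lra).
  rewrite Rabs_right by lra. simpl. rewrite Rmult_1_r. lra.
Qed.

Lemma core (s : R -> R) :
  (exists c eta : R, 0 < c /\ 0 < eta /\
    forall e : R, 0 < e -> e <= 1 -> e < eta -> Rabs (rr e - s e) <= c * (e ^ 1)) ->
  (forall x : R, 0 < x -> x <= 1 ->
   forall d : R, 0 < d -> exists del : R, 0 < del /\
    forall y : R, 0 < y -> y <= 1 -> Rabs (y - x) < del -> Rabs (s y - s x) < d) ->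
  False.
Proof.
  intros [c [eta [Hc [Heta Hn]]]] Hcont.
  set (z := up (8 * c + 2 / eta + 2)).
  destruct (archimed (8 * c + 2 / eta + 2)) as [A _]. fold z in A.
  set (n := IZR z).
  assert (0 < 2 / eta) by (apply Rdiv_lt_0_compat; lra).
  assert (Hn2 : 2 < n) by (unfold n; lra).
  assert (Hn8 : 8 * c < n) by (unfold n; lra).
  assert (He : 2 / eta < n) by (unfold n; lra).
  assert (Hx0 : 0 < / n) by (apply Rinv_0_lt_compat; lra).
  assert (Hx1 : / n <= 1) by (rewrite <- Rinv_1; apply Rinv_le_contravar; lra).
  destruct (Hcont (/ n) Hx0 Hx1 (1/4) ltac:(lra)) as [del [Hdel Hy]].
  set (h := Rmin (1/2) (del/4)).
  assert (Hh1 : 0 < h) by (unfold h; apply Rmin_glb_lt; lra).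
  assert (Hh2 : h <= 1/2) by apply Rmin_l.
  assert (Hh3 : h <= del/4) by apply Rmin_r.
  set (y := / (n - h)).
  assert (Hy0 : 0 < y) by (apply Rinv_0_lt_compat; lra).
  assert (Hyx : / n < y) by (apply Rinv_lt_contravar; nra).
  assert (Hy2 : y <= 2 / n).
  { unfold y. unfold Rdiv. apply (Rmult_le_reg_l (n - h)); [lra|].
    rewrite Rinv_r by lra. apply (Rmult_le_reg_l n); [lra|].
    replace (n * ((n - h) * (2 * / n))) with (2 * (n - h)) by (field; lra). nra. }
  assert (Hyd : y - / n < del).
  { unfold y. replace (/ (n - h) - / n) with (h / (n * (n - h))) by (field; lra).
    apply Rmult_lt_reg_r with (n * (n - h)); [nra|].
    unfold Rdiv. rewrite Rmult_assoc, Rinv_l by nra.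
    assert (1 <= n * (n - h)) by nra. nra. }
  assert (H2n : 2 / n <= 1).
  { unfold Rdiv; apply Rmult_le_reg_l with n; [lra|]. rewrite <- Rmult_assoc.
    rewrite (Rmult_comm n 2), Rmult_assoc, Rinv_r by lra. lra. }
  assert (H2e : 2 / n < eta).
  { unfold Rdiv in *. apply Rmult_lt_reg_l with n; [lra|].
    replace (n * (2 * / n)) with 2 by (field; lra).
    apply Rmult_lt_reg_r with (/ eta). apply Rinv_0_lt_compat; lra.
    rewrite Rmult_assoc, Rinv_r by lra. lra. }
  assert (Hcy : c * y < 1/4).
  { apply Rle_lt_trans with (c * (2 / n)). apply Rmult_le_compat_l; lra.
    unfold Rdiv. apply Rmult_lt_reg_r with n; [lra|].
    replace (c * (2 * / n) * n) with (2 * c) by (field; lra). lra. }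
  assert (Hrx : rr (/ n) = n + 1).
  { unfold rr. rewrite Rinv_inv. unfold n.
    rewrite <- (tech_up (IZR z) (z + 1)); rewrite plus_IZR; lra. }
  assert (Hry : rr y = n).
  { unfold rr, y. rewrite Rinv_inv.
    rewrite <- (tech_up (n - h) z) by (unfold n in *; lra). reflexivity. }
  pose proof (Hn (/ n) Hx0 Hx1 ltac:(lra)) as E1.
  pose proof (Hn y Hy0 ltac:(lra) ltac:(lra)) as E2.
  pose proof (Hy y Hy0 ltac:(lra) ltac:(rewrite Rabs_right; lra)) as E3.
  simpl in E1, E2. rewrite Rmult_1_r in E1, E2.
  rewrite Hrx in E1. rewrite Hry in E2.
  apply Rabs_le_between in E1. apply Rabs_le_between in E2.
  apply Rabs_lt_between in E3. nra.
Qed.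

Theorem lemma3p4 :
  tau_co_not_surjective Rabs Rminus /\ tau_co_not_surjective Cmod Cminus.
Proof.
  split.
  - exists rr. split; [apply rr_mod|]. intros s _ Hc Hneg.
    apply (core s); [apply (Hneg 1%nat)|exact Hc].
  - exists (fun e => RtoC (rr e)). split.
    + destruct rr_mod as [N [c [eta [A [B C]]]]]. exists N, c, eta.
      repeat split; auto. intros e H1 H2 H3. rewrite Cmod_R. auto.
    + intros s _ Hc Hneg. apply (core (fun e => Re (s e))).
      * destruct (Hneg 1%nat) as [c [eta [A [B C]]]]. exists c, eta.
        repeat split; auto. intros e H1 H2 H3.
        eapply Rle_trans; [|apply (C e H1 H2 H3)].
        eapply Rle_trans; [|apply re_le_Cmod]. right. reflexivity.
      * intros x H1 H2 d Hd. destruct (Hc x H1 H2 d Hd) as [del [A B]].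
        exists del. split; auto. intros y Y1 Y2 Y3.
        eapply Rle_lt_trans; [|apply (B y Y1 Y2 Y3)].
        eapply Rle_trans; [|apply re_le_Cmod]. right. reflexivity.
Qed.
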